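(* Let $\mathcal{X}$ be a finite set of prompts, $\mathcal{Y}$ a finite set of outputs, $r:\mathcal{X}\times\mathcal{Y}\to\{0,1\}$ a reward function, and $\pi_\theta$ a tabular policy. Suppose $\theta(t)$, $t\ge 0$, follows the gradient flow $\frac{d}{dt}\theta(t) = \nabla \mathcal{J}_{\mathrm{RL}}(\theta(t))$, where $\mathcal{J}_{\mathrm{RL}}(\theta) = \sum_{x\in\mathcal{X}}\mathbb{E}_{y\sim\pi_\theta(\cdot\mid x)}[r(x,y)]$. Then for any prompt $x \in \mathcal{X}$, any output $y \in \mathcal{Y}$, and any time $T \geq 0$: $$\frac{d}{dt}\pi_{\theta(t)}(y\mid x) = \pi_{\theta(t)}(y\mid x)^2\left[r(x, y) - \mathbb{E}_{y'' \sim \pi_{\theta(t)}(\cdot \mid x)}[r(x, y'')]\right] - \pi_{\theta(t)}(y\mid x)\sum_{y' \in \mathcal{Y}}\pi_{\theta(t)}(y'\mid x)^2\left[r(x, y') - \mathbb{E}_{y'' \sim \pi_{\theta(t)}(\cdot \mid x)}[r(x, y'')]\right],$$ and $$\pi_{\theta(T)}(y\mid x) \leq \pi_{\theta(0)}(y\mid x) \cdot \exp(2T).$$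
   Context: A tabular policy assigns an independent trainable logit $\theta_{y,x}\in\mathbb{R}$ to each pair $(y,x)\in\mathcal{Y}\times\mathcal{X}$, with $\pi_\theta(y\mid x) = \exp(\theta_{y,x})/\sum_{y'\in\mathcal{Y}}\exp(\theta_{y',x})$. *)

(* Defs.v *)
From HB Require Import structures.
From mathcomp Require Import all_boot all_order all_algebra.
From mathcomp Require Import all_classical all_reals all_analysis.
Set Implicit Arguments. Unset Strict Implicit. Unset Printing Implicit Defensive.
Import Order.TTheory GRing.Theory Num.Theory.
Import numFieldNormedType.Exports.
Local Open Scope ring_scope.

Section Tabular.
Variables (R : realType) (X Y : finType).

Definition pol (theta : Y -> X -> R) (y : Y) (x : X) : R :=
  expR (theta y x) / \sum_(y' : Y) expR (theta y' x).

(* E_{y ~ pi_theta(.|x)} [r(x,y)], reward r : X -> Y -> {0,1} encoded as bool *)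
Definition exp_reward (r : X -> Y -> bool) (theta : Y -> X -> R) (x : X) : R :=
  \sum_(y : Y) pol theta y x * (r x y)%:R.

Definition J_RL (r : X -> Y -> bool) (theta : Y -> X -> R) : R :=
  \sum_(x : X) exp_reward r theta x.

Definition upd (theta : Y -> X -> R) (y : Y) (x : X) (s : R) : Y -> X -> R :=
  fun y' x' => if (y' == y) && (x' == x) then s else theta y' x'.

Definition grad_J (r : X -> Y -> bool) (theta : Y -> X -> R) (y : Y) (x : X) : R :=
  derive1 (fun s => J_RL r (upd theta y x s)) (theta y x).

End Tabular.

(* Main.v *)
Require Import Defs.
From HB Require Import structures.
From mathcomp Require Import all_boot all_order all_algebra.
From mathcomp Require Import all_classical all_reals all_analysis.
From mathcomp Require Import ring lra.
Import Order.TTheory GRing.Theory Num.Theory.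
Import numFieldNormedType.Exports.
Local Open Scope ring_scope.

Section S.
Variables (R : realType) (Y : finType).

Lemma is_derive_fsum (h : Y -> R -> R) (dh : Y -> R) (t : R) :
  (forall i, is_derive t 1 (h i) (dh i)) ->
  is_derive t 1 (fun s => \sum_i h i s) (\sum_i dh i).
Proof.
move=> H.
have -> : (fun s => \sum_i h i s) = \sum_i h i.
  by apply/funext => s; rewrite fct_sumE.
by elim/big_ind2 : _ => // [|] *; [exact: is_derive_cst|exact: is_deriveD].
Qed.

Lemma softmax_derive (z : R -> Y -> R) (dz : Y -> R) (t : R) (y : Y) :
  (forall y', is_derive t 1 (fun s => z s y') (dz y')) ->
  is_derive t 1 (fun s => expR (z s y) / \sum_y' expR (z s y'))
    (expR (z t y) / (\sum_y' expR (z t y')) *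
      (dz y - \sum_y' expR (z t y') / (\sum_y'' expR (z t y'')) * dz y')).
Proof.
move=> H.
have He : forall y', is_derive t 1 (fun s => expR (z s y')) (expR (z t y') * dz y').
  move=> y'; exact: (@is_derive1_comp _ expR (fun s => z s y')).
have HS := @is_derive_fsum (fun y' s => expR (z s y')) _ t He.
set S := \sum_y' expR (z t y').
have S0 : S != 0.
  rewrite /S gt_eqF // (@lt_le_trans _ _ (expR (z t y))) ?expR_gt0 //.
  rewrite (bigD1 y) //= lerDl sumr_ge0 // => i _; exact: expR_ge0.
have HV := is_deriveV S0 HS.
have HM := is_deriveM (He y) HV.
apply: is_derive_eq HM _.
rewrite /GRing.scale /= -/S.
have -> : \sum_i expR (z t i) / S * dz i = S^-1 * \sum_i expR (z t i) * dz i.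
  by rewrite mulr_sumr; apply: eq_bigr => i _; rewrite mulrAC mulrC.
set A := \sum_i _.
by field.
Qed.

Lemma sum_delta (f : Y -> R) (y : Y) : \sum_y' f y' * (y' == y)%:R = f y.
Proof.
rewrite (bigD1 y) //= eqxx mulr1 big1 ?addr0 // => i /negbTE ->; by rewrite mulr0.
Qed.
End S.

Section T.
Variables (R : realType) (X Y : finType).

Lemma pol_derive (Th : R -> Y -> X -> R) (x : X) (dz : Y -> R) (t : R) (y : Y) :
  (forall y', is_derive t 1 (fun s => Th s y' x) (dz y')) ->
  is_derive t 1 (fun s => pol (Th s) y x)
    (pol (Th t) y x * (dz y - \sum_y' pol (Th t) y' x * dz y')).
Proof. move=> H; exact: (@softmax_derive R Y (fun s y => Th s y x) dz t y H). Qed.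

Lemma upd_id (th : Y -> X -> R) y x : upd th y x (th y x) = th.
Proof.
apply/funext => y'; apply/funext => x'; rewrite /upd.
by case: andP => [[/eqP-> /eqP->]|].
Qed.

Lemma pol_upd_other (th : Y -> X -> R) y x s y' x' : x' != x ->
  pol (upd th y x s) y' x' = pol th y' x'.
Proof.
move=> hx; have E : forall y'', upd th y x s y'' x' = th y'' x'.
  by move=> y''; rewrite /upd (negbTE hx) andbF.
rewrite /pol E; congr (_ / _); apply: eq_bigr => i _; by rewrite E.
Qed.

Lemma grad_J_eq (r : X -> Y -> bool) (th : Y -> X -> R) y x :
  grad_J r th y x = pol th y x * ((r x y)%:R - exp_reward r th x).
Proof.
pose C := \sum_(x' | x' != x) exp_reward r th x'.
pose F := fun s => \sum_y' pol (upd th y x s) y' x * (r x y')%:R.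
have fE : (fun s => J_RL r (upd th y x s)) = F + cst C.
  apply/funext => s /=; rewrite /J_RL (bigD1 x) //=; congr (_ + _).
  apply: eq_bigr => x' hx'; rewrite /exp_reward; apply: eq_bigr => y' _.
  by rewrite pol_upd_other.
have Hz : forall y', is_derive (th y x) 1 (fun s => upd th y x s y' x) ((y' == y)%:R).
  move=> y'; rewrite /upd eqxx andbT; case: (y' == y).
    exact: is_derive_id.
  exact: is_derive_cst.
have HF := @is_derive_fsum R Y (fun y' s => pol (upd th y x s) y' x * (r x y')%:R) _ (th y x)
  (fun y' => is_deriveM (@pol_derive (fun s => upd th y x s) x _ (th y x) y' Hz) (is_derive_cst ((r x y')%:R : R) (th y x : R) 1)).
have HD := is_deriveD HF (is_derive_cst (C : R) (th y x : R) 1).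
rewrite /grad_J fE derive1E.
case: HD => _ ->.
rewrite upd_id sum_delta addr0.
rewrite (eq_bigr (fun i => pol th i x * (r x i)%:R * (i == y)%:R
   - pol th y x * (pol th i x * (r x i)%:R))); last first.
  move=> i _; rewrite scaler0 add0r /cst /GRing.scale /=; ring.
by rewrite sumrB sum_delta -mulr_sumr /exp_reward mulrBr.
Qed.


Lemma pol_ge0 (th : Y -> X -> R) y x : 0 <= pol th y x.
Proof. by rewrite /pol divr_ge0 ?expR_ge0 // sumr_ge0 // => i _; exact: expR_ge0. Qed.

Lemma pol_sum (th : Y -> X -> R) (y : Y) (x : X) : \sum_y' pol th y' x = 1.
Proof.
rewrite /pol -mulr_suml divff // gt_eqF // (bigD1 y) //= ltr_pwDl ?expR_gt0 //.
by rewrite sumr_ge0 // => i _; exact: expR_ge0.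
Qed.

Lemma pol_le1 (th : Y -> X -> R) y x : pol th y x <= 1.
Proof.
rewrite -(pol_sum th y x) (bigD1 y) //= lerDl sumr_ge0 // => i _; exact: pol_ge0.
Qed.

Lemma er_ge0 r (th : Y -> X -> R) x : 0 <= exp_reward r th x.
Proof. by rewrite /exp_reward sumr_ge0 // => i _; rewrite mulr_ge0 ?pol_ge0. Qed.

Lemma er_le1 r (th : Y -> X -> R) (y : Y) x : exp_reward r th x <= 1.
Proof.
rewrite -(pol_sum th y x) /exp_reward ler_sum // => i _.
by rewrite ler_piMr ?pol_ge0 // lern1 leq_b1.
Qed.

Lemma D_le (r : X -> Y -> bool) (th : Y -> X -> R) y x :
  pol th y x ^+ 2 * ((r x y)%:R - exp_reward r th x)
       - pol th y x *
         \sum_(y' : Y) pol th y' x ^+ 2 *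
                       ((r x y')%:R - exp_reward r th x) <= 2 * pol th y x.
Proof.
have E0 := er_ge0 r th x; have E1 := er_le1 r th y x.
have p0 := pol_ge0 th y x; have p1 := pol_le1 th y x.
set E := exp_reward r th x.
have A : pol th y x ^+ 2 * ((r x y)%:R - E) <= pol th y x.
  have : (r x y)%:R <= 1 :> R by rewrite lern1 leq_b1.
  move=> h; apply: (le_trans (y := pol th y x ^+ 2)).
    apply: ler_piMr; [exact: sqr_ge0 | rewrite /E; lra].
  by rewrite expr2; apply: ler_piMr.
have B : - \sum_(y' : Y) pol th y' x ^+ 2 * ((r x y')%:R - E) <= 1.
  apply: (le_trans (y := \sum_y' pol th y' x)); last by rewrite (pol_sum th y x).
  rewrite -sumrN ler_sum // => i _.
  have := pol_ge0 th i x; have := pol_le1 th i x.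
  have : 0 <= (r x i)%:R :> R by [].
  move=> h q1 q0; rewrite -mulrN.
  apply: (le_trans (y := pol th i x ^+ 2)).
    apply: ler_piMr; [exact: sqr_ge0 | rewrite /E; lra].
  by rewrite expr2; apply: ler_piMr.
have : - (pol th y x * \sum_(y' : Y) pol th y' x ^+ 2 * ((r x y')%:R - E)) <= pol th y x.
  by rewrite -mulrN; apply: ler_piMr.
lra.
Qed.
End T.

Theorem lemma2 (R : realType) (X Y : finType) (r : X -> Y -> bool)
  (theta : R -> Y -> X -> R)
  (Hflow : forall t : R, 0 <= t -> forall (y : Y) (x : X),
     is_derive t 1 (fun s => theta s y x) (grad_J r (theta t) y x)) :
  forall (x : X) (y : Y) (T : R), 0 <= T ->
    is_derive T 1 (fun t => pol (theta t) y x)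
      (pol (theta T) y x ^+ 2 * ((r x y)%:R - exp_reward r (theta T) x)
       - pol (theta T) y x *
         \sum_(y' : Y) pol (theta T) y' x ^+ 2 *
                       ((r x y')%:R - exp_reward r (theta T) x))
    /\ pol (theta T) y x <= pol (theta 0) y x * expR (2 * T).
Proof.
move=> x y.
have HD : forall T : R, 0 <= T -> is_derive T 1 (fun t => pol (theta t) y x)
      (pol (theta T) y x ^+ 2 * ((r x y)%:R - exp_reward r (theta T) x)
       - pol (theta T) y x *
         \sum_(y' : Y) pol (theta T) y' x ^+ 2 *
                       ((r x y')%:R - exp_reward r (theta T) x)).
  move=> T hT.
  have H := @pol_derive R X Y theta x _ T y (fun y0 => Hflow T hT y0 x).
  apply: is_derive_eq H _.
  rewrite grad_J_eq.
  under eq_bigr => i _ do rewrite grad_J_eq mulrA -expr2.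
  ring.
move=> T hT; split; first exact: HD.
pose e := fun t : R => expR ((-2) * t).
have He : forall c : R, is_derive c 1 e (expR ((-2) * c) * (-2)).
  move=> c.
  have h1 : is_derive c 1 (fun t : R => (-2) * t) (-2).
    apply: is_derive_eq (is_deriveM (is_derive_cst (-2 : R) c 1) (is_derive_id c 1)) _.
    by rewrite /GRing.scale /= mulr1 mulr0 addr0.
  exact: (@is_derive1_comp _ expR (fun t : R => (-2) * t) c _ _ (is_derive_expR _) h1).
pose p := fun t => pol (theta t) y x.
pose g := fun t => p t * e t.
pose D := fun T => pol (theta T) y x ^+ 2 * ((r x y)%:R - exp_reward r (theta T) x)
       - pol (theta T) y x *
         \sum_(y' : Y) pol (theta T) y' x ^+ 2 *
                       ((r x y')%:R - exp_reward r (theta T) x).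
pose dg := fun c => e c * (D c - 2 * p c).
have Hg : forall c : R, 0 <= c -> is_derive c 1 g (dg c).
  move=> c hc.
  apply: is_derive_eq (is_deriveM (HD c hc) (He c)) _.
  rewrite /GRing.scale /= /dg /e /p /D; ring.
case: (@MVT_segment R g dg 0 T hT).
- move=> c; rewrite in_itv /= => /andP[hc _]; exact: Hg (ltW hc).
- apply: derivable_within_continuous => c; rewrite in_itv /= => /andP[hc _].
  by case: (Hg c hc).
move=> c hc EE.
have c0 : 0 <= c by move: hc; rewrite in_itv /= => /andP[].
have dg0 : dg c <= 0.
  rewrite /dg; apply: mulr_ge0_le0; first exact: expR_ge0.
  have := @D_le R X Y r (theta c) y x; rewrite /D /p; lra.
have gle : g T <= g 0.
  have : dg c * (T - 0) <= 0 by apply: mulr_le0_ge0 => //; rewrite subr0.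
  lra.
have g0 : g 0 = p 0 by rewrite /g /e mulr0 expR0 mulr1.
have pT : p T = g T * expR (2 * T).
  by rewrite /g /e -mulrA -expRD mulNr addNr expR0 mulr1.
rewrite -/(p T) -/(p 0) pT -g0.
by apply: ler_wpM2r => //; exact: expR_ge0.
Qed.
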